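(* Let $(F,\phi)$ be an extended representation graph for $E$, let $w\in F^0$, and let $p,q$ be paths of length $\ge1$ in $F$ with source $w$. If $r(p)=r(q)$, then $p=q$, or $cp=q$, or $p=cq$ for some closed path $c$ in $F$.
   Context: $E$ is a row-finite directed graph with, for each vertex $v$ emitting an edge, a chosen special edge $e^v\in s^{-1}(v)$; other edges are nonspecial. The double graph $E_d$ has vertices $E^0$ and edges $e$ (real) and $e^*$ (ghost) for $e\in E^1$, with $s_d(e)=s(e),r_d(e)=r(e),s_d(e^* )=r(e),r_d(e^* )=s(e)$. A closed path is a path of length $\ge1$ with equal source and range; juxtaposition denotes concatenation. An extended representation graph for $E$ is a pair $(F,\phi)$, $F$ a directed graph, $\phi:F\to E_d$ a graph homomorphism, such that for every $w\in F^0$: (i) $w$ is a source or receives exactly one edge $f_w$; (ii) if $w$ is a source or $\phi(f_w)$ is a nonspecial real edge, $\phi$ maps $s^{-1}(w)$ bijectively onto $s_d^{-1}(\phi(w))$; (iii) if $\phi(f_w)$ is a special real edge, onto $s_d^{-1}(\phi(w))\setminus\{\phi(f_w)^*\}$; (iv) if $\phi(f_w)$ is a ghost edge, onto the ghost edges in $s_d^{-1}(\phi(w))$. *)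

(* Defs.v *)
From Stdlib Require Import List.
Import ListNotations.
Set Implicit Arguments.

Record graph := Graph {
  vert : Type;
  edge : Type;
  src : edge -> vert;
  rng : edge -> vert }.
Arguments src {g} _.
Arguments rng {g} _.

Definition row_finite (E : graph) : Prop :=
  forall v : vert E, exists l : list (edge E),
    forall e : edge E, src e = v -> In e l.

(* A choice of special edges: sp v = Some (e^v) for each vertex v emitting
   an edge, with e^v in s^{-1}(v); sp v = None if v emits no edge. *)
Definition special_choice (E : graph) (sp : vert E -> option (edge E)) : Prop :=
  (forall v e, sp v = Some e -> src e = v) /\
  (forall v, sp v = None -> forall e : edge E, src e <> v).
Arguments special_choice {E} sp.

Definition is_special (E : graph) (sp : vert E -> option (edge E)) (e : edge E) : Prop :=
  sp (src e) = Some e.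
Arguments is_special {E} sp e.

(* Double graph E_d: edges inl e (real edge e) and inr e (ghost edge e^* ). *)
Definition double (E : graph) : graph :=
  @Graph (vert E) (edge E + edge E)
    (fun x => match x with inl e => src e | inr e => rng e end)
    (fun x => match x with inl e => rng e | inr e => src e end).

Definition is_ghost (E : graph) (x : edge (double E)) : Prop :=
  match x with inl _ => False | inr _ => True end.

Record hom (F G : graph) := Hom {
  hv : vert F -> vert G;
  he : edge F -> edge G;
  hom_src : forall f, src (he f) = hv (src f);
  hom_rng : forall f, rng (he f) = hv (rng f) }.

Definition bij_onto (F G : graph) (phi : hom F G) (w : vert F)
  (B : edge G -> Prop) : Prop :=
  (forall f, src f = w -> B (he phi f)) /\
  (forall f f', src f = w -> src f' = w -> he phi f = he phi f' -> f = f') /\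
  (forall g, B g -> exists f, src f = w /\ he phi f = g).

Definition is_source (F : graph) (w : vert F) : Prop :=
  forall f : edge F, rng f <> w.
Arguments is_source {F} w.

Definition ext_rep_graph (E : graph) (sp : vert E -> option (edge E))
  (F : graph) (phi : hom F (double E)) : Prop :=
  forall w : vert F,
    (is_source w \/ exists! f : edge F, rng f = w) /\
    (is_source w ->
       bij_onto phi w (fun g => src g = hv phi w)) /\
    (forall f e, rng f = w -> he phi f = inl e -> ~ is_special sp e ->
       bij_onto phi w (fun g => src g = hv phi w)) /\
    (forall f e, rng f = w -> he phi f = inl e -> is_special sp e ->
       bij_onto phi w (fun g => src g = hv phi w /\ g <> inr e)) /\
    (forall f e, rng f = w -> he phi f = inr e ->
       bij_onto phi w (fun g => src g = hv phi w /\ is_ghost g)).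

Fixpoint chain (F : graph) (e : edge F) (l : list (edge F)) : Prop :=
  match l with
  | [] => True
  | e' :: l' => rng e = src e' /\ chain F e' l'
  end.

Definition path_from_to (F : graph) (w v : vert F) (p : list (edge F)) : Prop :=
  match p with
  | [] => False
  | e :: l => src e = w /\ chain F e l /\ rng (last l e) = v
  end.
Arguments path_from_to {F} w v p.

Definition closed_path (F : graph) (c : list (edge F)) : Prop :=
  exists u, path_from_to u u c.
Arguments closed_path {F} c.

(* Main.v *)
Require Import Defs.
From Stdlib Require Import List.
Import ListNotations.

Lemma last_irr (A : Type) (y : A) l d d2 : last (y :: l) d = last (y :: l) d2.
Proof. revert y; induction l; intros; simpl; [reflexivity|]. apply IHl. Qed.

Lemma chain_app (F : graph) (l1 l2 : list (edge F)) (e : edge F) :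
  chain F e (l1 ++ l2) <-> chain F e l1 /\
    match l2 with [] => True | x :: l2' => rng (last l1 e) = src x /\ chain F x l2' end.
Proof.
  revert e; induction l1 as [|a l1 IH]; intro e.
  - destruct l2; simpl; tauto.
  - change (chain F e ((a::l1)++l2)) with (rng e = src a /\ chain F a (l1++l2)).
    change (chain F e (a::l1)) with (rng e = src a /\ chain F a l1).
    rewrite IH.
    assert (Hl : last (a::l1) e = last l1 a)
      by (destruct l1 as [|b l1]; [reflexivity| apply (last_irr _ b l1)]).
    rewrite Hl. tauto.
Qed.


Definition ok (F : graph) (l : list (edge F)) : Prop :=
  match l with [] => True | e :: l' => chain F e l' end.

Lemma ok_app (F : graph) (l1 l2 : list (edge F)) :
  ok F (l1 ++ l2) <-> ok F l1 /\ ok F l2 /\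
    (forall d, l1 <> [] -> l2 <> [] -> rng (last l1 d) = src (hd d l2)).
Proof.
  destruct l1 as [|e l1]; simpl.
  - split; [intros H; split; [exact I| split; [exact H| congruence]] | tauto].
  - rewrite chain_app. destruct l2 as [|x l2]; simpl.
    + split; [intros [H _]; split; [exact H|split;[exact I|congruence]] | tauto].
    + split.
      * intros [H1 [H2 H3]]. split; [exact H1|split;[exact H3|]].
        intros d _ _. rewrite <- H2. destruct l1 as [|y l1]; [reflexivity|].
        f_equal; apply (last_irr _ y l1).
      * intros [H1 [H2 H3]]. split; [exact H1|split;[|exact H2]].
        specialize (H3 e ltac:(congruence) ltac:(congruence)). simpl in H3.
        rewrite <- H3. destruct l1 as [|y l1]; [reflexivity|]. f_equal; apply (last_irr _ y l1).
Qed.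

Lemma suffix (F : graph) (HU : forall f f' : edge F, rng f = rng f' -> f = f') :
  forall (p q : list (edge F)) d, ok F p -> ok F q -> p <> [] -> q <> [] ->
  rng (last p d) = rng (last q d) -> exists c, p = c ++ q \/ q = c ++ p.
Proof.
  intro p; induction p as [|x p' IH] using rev_ind; [intros; congruence|].
  intros q d Hp Hq _ Hq0 Hl.
  destruct q as [|y q' _] using rev_ind; [congruence|].
  rewrite !last_last in Hl. apply HU in Hl. subst y.
  apply ok_app in Hp as [Hp' [_ Hpx]]. apply ok_app in Hq as [Hq' [_ Hqx]].
  destruct p' as [|a p'']; [exists q'; right; reflexivity|].
  destruct q' as [|b q'']; [exists (a :: p''); left; reflexivity|].
  specialize (Hpx d ltac:(congruence) ltac:(congruence)).
  specialize (Hqx d ltac:(congruence) ltac:(congruence)).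
  simpl hd in Hpx, Hqx.
  destruct (IH (b :: q'') d Hp' Hq' ltac:(congruence) ltac:(congruence)
    ltac:(congruence)) as [c [Hc|Hc]].
  - exists c; left. rewrite Hc, app_assoc. reflexivity.
  - exists c; right. rewrite Hc, app_assoc. reflexivity.
Qed.

Lemma pft_ok (F : graph) (w v : vert F) p : path_from_to w v p ->
  p <> [] /\ ok F p /\ (forall d, src (hd d p) = w) /\ (forall d, rng (last p d) = v).
Proof.
  destruct p as [|e l]; simpl; [tauto|]. intros [H1 [H2 H3]].
  split; [congruence|]. split; [exact H2|]. split; [intros; exact H1|].
  intro d. rewrite <- H3. f_equal.
  destruct l as [|b l]; [reflexivity|]. apply (last_irr _ b l).
Qed.

Lemma ok_pft (F : graph) (w v : vert F) p d : p <> [] -> ok F p ->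
  src (hd d p) = w -> rng (last p d) = v -> path_from_to w v p.
Proof.
  destruct p as [|e l]; simpl; [congruence|]. intros _ H2 H1 H3.
  split; [exact H1|]. split; [exact H2|]. rewrite <- H3. f_equal.
  destruct l as [|b l]; [reflexivity|]. apply (last_irr _ b l).
Qed.

Lemma closed_of (F : graph) (w v : vert F) c q : c <> [] ->
  path_from_to w v (c ++ q) -> path_from_to w v q -> closed_path c.
Proof.
  intros Hc Hcq Hq. exists w.
  apply pft_ok in Hcq as [_ [Hok [Hs _]]].
  apply pft_ok in Hq as [Hq0 [_ [Hqs _]]].
  destruct c as [|e l]; [congruence|].
  apply ok_app in Hok as [Hokc [_ Hj]].
  apply ok_pft with (d := e); auto.
  - exact (Hs e).
  - rewrite (Hj e Hc Hq0). apply Hqs.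
Qed.

Theorem lemma5p15 (E : graph) (sp : vert E -> option (edge E))
  (HE : row_finite E) (Hsp : special_choice sp)
  (F : graph) (phi : hom F (double E)) (HF : ext_rep_graph sp phi)
  (w v : vert F) (p q : list (edge F)) :
  path_from_to w v p -> path_from_to w v q ->
  p = q \/ exists c, closed_path c /\ (c ++ p = q \/ p = c ++ q).
Proof.
  intros Hp Hq.
  assert (HU : forall f f' : edge F, rng f = rng f' -> f = f').
  { intros f f' Hff. destruct (HF (rng f)) as [[Hs|[g [Hg Hu]]] _].
    - exfalso. exact (Hs f eq_refl).
    - rewrite <- (Hu f eq_refl). apply Hu. congruence. }
  pose proof (pft_ok _ _ _ _ Hp) as [Hp0 [Hpok [_ Hpl]]].
  pose proof (pft_ok _ _ _ _ Hq) as [Hq0 [Hqok [_ Hql]]].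
  destruct p as [|d p']; [congruence|].
  destruct (suffix _ HU (d :: p') q d Hpok Hqok Hp0 Hq0
    ltac:(rewrite Hpl, Hql; reflexivity)) as [c [Hc|Hc]].
  - destruct c as [|a c']; [left; exact Hc|]. right. exists (a :: c'). split.
    + rewrite Hc in Hp. apply (closed_of _ w v _ q); [congruence|exact Hp|exact Hq].
    + right; exact Hc.
  - destruct c as [|a c']; [left; symmetry; exact Hc|]. right. exists (a :: c'). split.
    + rewrite Hc in Hq. apply (closed_of _ w v _ (d :: p')); [congruence|exact Hq|exact Hp].
    + left; symmetry; exact Hc.
Qed.
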